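(* Under the hypotheses of the preceding setting (f proper lsc with the K\L{} property at $x^*$ with desingularizing $\varphi$ on $\Gamma_\eta(x^*,\delta)$; $(x^k)$ satisfying $\mathbf{H}_1$, $\mathbf{H}_2$, $\mathbf{H}_3$ and $\mathbf{S}(x^*,\delta,\rho)$), we have $x^k\in\underline{\Gamma}_\eta(x^*,\rho)$ for all $k$, and $(x^k)$ converges strongly to some $\bar x$ in the closed ball $\overline{B(x^*,\rho)}$. Moreover $\sum_{k=1}^\infty\|x^{k+1}-x^k\|<\infty$, $\liminf_{k\to\infty}\|\partial f(x^k)\|_-=0$, and $f(\bar x)\le\lim_{k\to\infty}f(x^k)=f(x^* )$.
   Context: $\partial f$ limiting Fréchet subdifferential, lazy slope $\|\partial f(x)\|_-=\inf_{p\in\partial f(x)}\|p\|$ ($+\infty$ if empty). K\L{} inequality on $\Gamma_\eta(x^*,\delta)=\{x:\|x-x^*\|<\delta,\ f(x^* )<f(x)<f(x^* )+\eta\}$: $\varphi'(f(x)-f(x^* ))\|\partial f(x)\|_-\ge1$, $\varphi$ continuous concave on $[0,\eta[$, $\varphi(0)=0$, $C^1$ with $\varphi'>0$ on $]0,\eta[$. $\underline{\Gamma}_\eta(x^*,r)=\{x:\|x-x^*\|<r,\ f(x^* )\le f(x)<f(x^* )+\eta\}$; $\Gamma_\eta(x^*,r)$ likewise with $f(x^* )<f(x)$. $\mathbf{H}_1$: $f(x^{k+1})+a_k\|x^{k+1}-x^k\|^2\le f(x^k)$, $a_k>0$. $\mathbf{H}_2$: $b_{k+1}\|\partial f(x^{k+1})\|_-\le\|x^{k+1}-x^k\|+\varepsilon_{k+1}$,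 $b_{k+1}>0$, $\varepsilon_{k+1}\ge0$. $\mathbf{H}_3$: (i) $a_k\ge\underline a>0$; (ii) $(b_k)\notin\ell^1$; (iii) $M:=\sup_{k\ge1}\frac1{a_kb_k}<\infty$; (iv) $(\varepsilon_k)\in\ell^1$. $\mathbf{S}(x^*,\delta,\rho)$: $\delta>\rho>0$ and (i) for each $k$, if $x^0,\dots,x^k\in\underline{\Gamma}_\eta(x^*,\rho)$ then $x^{k+1}\in\underline{\Gamma}_\eta(x^*,\delta)$; (ii) $x^0\in\Gamma_\eta(x^*,\rho)$ and $\|x^*-x^0\|+2\sqrt{\frac{f(x^0)-f(x^* )}{a_0}}+M\varphi(f(x^0)-f(x^* ))+\sum_{i=1}^\infty\varepsilon_i<\rho$. *)

(* Defs.v *)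
From Stdlib Require Import Reals Lra Classical ClassicalEpsilon.
Open Scope R_scope.

Record PreHilbert := mkPreHilbert {
  Hcar :> Type;
  Hadd : Hcar -> Hcar -> Hcar;
  Hscal : R -> Hcar -> Hcar;
  Hzero : Hcar;
  Hinner : Hcar -> Hcar -> R;
  Hadd_assoc : forall x y z, Hadd x (Hadd y z) = Hadd (Hadd x y) z;
  Hadd_comm : forall x y, Hadd x y = Hadd y x;
  Hadd_zero : forall x, Hadd x Hzero = x;
  Hadd_opp : forall x, Hadd x (Hscal (-1) x) = Hzero;
  Hscal_one : forall x, Hscal 1 x = x;
  Hscal_assoc : forall a b x, Hscal a (Hscal b x) = Hscal (a * b) x;
  Hscal_distr_l : forall a x y, Hscal a (Hadd x y) = Hadd (Hscal a x) (Hscal a y);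
  Hscal_distr_r : forall a b x, Hscal (a + b) x = Hadd (Hscal a x) (Hscal b x);
  Hinner_sym : forall x y, Hinner x y = Hinner y x;
  Hinner_add_l : forall x y z, Hinner (Hadd x y) z = Hinner x z + Hinner y z;
  Hinner_scal_l : forall a x y, Hinner (Hscal a x) y = a * Hinner x y;
  Hinner_pos : forall x, 0 <= Hinner x x;
  Hinner_def : forall x, Hinner x x = 0 -> x = Hzero
}.
Arguments Hadd {_}. Arguments Hscal {_}. Arguments Hzero {_}. Arguments Hinner {_}.

Definition Hsub {E : PreHilbert} (x y : E) : E := Hadd x (Hscal (-1) y).
Definition Hnorm {E : PreHilbert} (x : E) : R := sqrt (Hinner x x).

Definition Hcauchy {E : PreHilbert} (u : nat -> E) : Prop :=
  forall eps, 0 < eps -> exists N, forall n m, (n >= N)%nat -> (m >= N)%nat ->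
    Hnorm (Hsub (u n) (u m)) < eps.

Definition Hcv {E : PreHilbert} (u : nat -> E) (l : E) : Prop :=
  forall eps, 0 < eps -> exists N, forall n, (n >= N)%nat -> Hnorm (Hsub (u n) l) < eps.

Definition Hweak_cv {E : PreHilbert} (u : nat -> E) (l : E) : Prop :=
  forall z, Un_cv (fun n => Hinner (u n) z) (Hinner l z).

Record Hilbert := mkHilbert {
  Hpre :> PreHilbert;
  Hcomplete : forall u : nat -> Hpre, Hcauchy u -> exists l, Hcv u l
}.

Inductive ER := Fin (r : R) | PInf.

Definition ER_le (a b : ER) : Prop :=
  match a, b with
  | _, PInf => True
  | PInf, Fin _ => False
  | Fin x, Fin y => x <= y
  end.

Definition ER_addR (a : ER) (c : R) : ER :=
  match a with Fin x => Fin (x + c) | PInf => PInf end.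

Definition Rlt_ER (r : R) (e : ER) : Prop :=
  match e with Fin x => r < x | PInf => True end.

Definition ER_ltR (e : ER) (r : R) : Prop :=
  match e with Fin x => x < r | PInf => False end.

Definition proper {E : PreHilbert} (f : E -> ER) : Prop :=
  exists x r, f x = Fin r.

Definition lsc {E : PreHilbert} (f : E -> ER) : Prop :=
  forall x r, Rlt_ER r (f x) ->
    exists d, 0 < d /\ forall y, Hnorm (Hsub y x) < d -> Rlt_ER r (f y).

Definition frechet_sub {E : PreHilbert} (f : E -> ER) (x p : E) : Prop :=
  exists fx, f x = Fin fx /\
  forall eps, 0 < eps -> exists d, 0 < d /\ forall y, Hnorm (Hsub y x) < d ->
    ER_le (Fin (fx + Hinner p (Hsub y x) - eps * Hnorm (Hsub y x))) (f y).

Definition lim_sub {E : PreHilbert} (f : E -> ER) (x p : E) : Prop :=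
  exists fx, f x = Fin fx /\
  exists (xn pn : nat -> E) (fn : nat -> R),
    Hcv xn x /\ (forall n, f (xn n) = Fin (fn n)) /\ Un_cv fn fx /\
    (forall n, frechet_sub f (xn n) (pn n)) /\ Hweak_cv pn p.

Definition is_inf (S : R -> Prop) (s : R) : Prop :=
  (forall r, S r -> s <= r) /\ (forall t, (forall r, S r -> t <= r) -> t <= s).

(* lazy slope ||df(x)||_- = inf { ||p|| : p in df(x) }, +oo if empty *)
Definition lazy_slope {E : PreHilbert} (f : E -> ER) (x : E) : ER :=
  match excluded_middle_informative (exists p, lim_sub f x p) with
  | left _ => Fin (epsilon (inhabits 0)
                    (is_inf (fun r => exists p, lim_sub f x p /\ r = Hnorm p)))
  | right _ => PInf
  end.

Definition ER_mul_ge1 (c : R) (s : ER) : Prop :=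
  match s with Fin v => 1 <= c * v | PInf => True end.

Definition in_0_eta (t : R) (eta : ER) : Prop := 0 <= t /\ Rlt_ER t eta.

Definition desing (eta : ER) (phi dphi : R -> R) : Prop :=
  phi 0 = 0 /\
  (forall t, in_0_eta t eta -> forall eps, 0 < eps -> exists d, 0 < d /\
     forall s, in_0_eta s eta -> Rabs (s - t) < d -> Rabs (phi s - phi t) < eps) /\
  (forall s t l, in_0_eta s eta -> in_0_eta t eta -> 0 <= l <= 1 ->
     l * phi s + (1 - l) * phi t <= phi (l * s + (1 - l) * t)) /\
  (forall t, 0 < t -> Rlt_ER t eta -> derivable_pt_lim phi t (dphi t)) /\
  (forall t, 0 < t -> Rlt_ER t eta -> continuity_pt dphi t) /\
  (forall t, 0 < t -> Rlt_ER t eta -> 0 < dphi t).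

(* x in Gamma_eta(xstar, r) (strict) / underline Gamma_eta(xstar, r) (non strict),
   where fstar = f(xstar) *)
Definition Gamma {E : PreHilbert} (f : E -> ER) (xstar : E) (fstar : R)
  (eta : ER) (r : R) (x : E) : Prop :=
  Hnorm (Hsub x xstar) < r /\
  exists fx, f x = Fin fx /\ fstar < fx /\ Rlt_ER (fx - fstar) eta.

Definition uGamma {E : PreHilbert} (f : E -> ER) (xstar : E) (fstar : R)
  (eta : ER) (r : R) (x : E) : Prop :=
  Hnorm (Hsub x xstar) < r /\
  exists fx, f x = Fin fx /\ fstar <= fx /\ Rlt_ER (fx - fstar) eta.

Definition KL_at {E : PreHilbert} (f : E -> ER) (xstar : E) (fstar : R)
  (eta : ER) (delta : R) (phi dphi : R -> R) : Prop :=
  0 < delta /\ Rlt_ER 0 eta /\ desing eta phi dphi /\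
  forall x fx, Gamma f xstar fstar eta delta x -> f x = Fin fx ->
    ER_mul_ge1 (dphi (fx - fstar)) (lazy_slope f x).

Definition ER_liminf_zero (u : nat -> ER) : Prop :=
  (forall eps, 0 < eps -> exists N, forall k, (k >= N)%nat -> Rlt_ER (- eps) (u k)) /\
  (forall eps, 0 < eps -> forall N, exists k, (k >= N)%nat /\ ER_ltR (u k) eps).

(* Main.v *)
Require Import Defs.
From Stdlib Require Import Reals Lra Psatz Classical ClassicalEpsilon.
Open Scope R_scope.

Section H.
Variable E : PreHilbert.
Implicit Types x y z u v : E.

Lemma inner_add_r x y z : Hinner x (Hadd y z) = Hinner x y + Hinner x z.
Proof. rewrite Hinner_sym, Hinner_add_l, (Hinner_sym _ y), (Hinner_sym _ z); auto. Qed.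
Lemma inner_scal_r a x y : Hinner x (Hscal a y) = a * Hinner x y.
Proof. rewrite Hinner_sym, Hinner_scal_l, Hinner_sym; auto. Qed.
Lemma inner_zero_l v : Hinner (@Hzero E) v = 0.
Proof.
  assert (H := Hinner_add_l E Hzero Hzero v). rewrite Hadd_zero in H. lra.
Qed.
Lemma inner_zero_r v : Hinner v (@Hzero E) = 0.
Proof. rewrite Hinner_sym; apply inner_zero_l. Qed.

Lemma Hnorm_pos u : 0 <= Hnorm u.
Proof. apply sqrt_pos. Qed.
Lemma Hnorm_sq u : Hnorm u * Hnorm u = Hinner u u.
Proof. apply sqrt_sqrt, Hinner_pos. Qed.

Lemma quad u v t : Hinner (Hadd u (Hscal t v)) (Hadd u (Hscal t v))
  = Hinner u u + 2 * t * Hinner u v + t * t * Hinner v v.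
Proof.
  rewrite Hinner_add_l, !inner_add_r, !Hinner_scal_l, !inner_scal_r, (Hinner_sym _ v u). ring.
Qed.

Lemma CS u v : Hinner u v <= Hnorm u * Hnorm v.
Proof.
  destruct (Req_dec (Hinner u u) 0) as [HA|HA].
  { apply Hinner_def in HA. subst. rewrite inner_zero_l.
    apply Rmult_le_pos; apply Hnorm_pos. }
  destruct (Req_dec (Hinner v v) 0) as [HC|HC].
  { apply Hinner_def in HC. subst. rewrite inner_zero_r.
    apply Rmult_le_pos; apply Hnorm_pos. }
  assert (PA := Hinner_pos E u). assert (PC := Hinner_pos E v).
  set (A := Hinner u u) in *. set (C := Hinner v v) in *. set (B := Hinner u v).
  assert (Q := Hinner_pos E (Hadd u (Hscal (- B / C) v))). rewrite quad in Q.
  fold A B C in Q.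
  assert (HB : B * B <= A * C).
  { assert (0 < C) by lra.
    replace (A + 2 * (- B / C) * B + - B / C * (- B / C) * C) with ((A * C - B * B) / C) in Q
      by (field; lra).
    apply Rmult_le_compat_r with (r := C) in Q; [|lra].
    unfold Rdiv in Q. rewrite Rmult_0_l, Rmult_assoc, Rinv_l in Q; lra. }
  unfold Hnorm. rewrite <- sqrt_mult by assumption.
  apply Rle_trans with (Rabs B); [apply Rle_abs|].
  rewrite <- sqrt_Rsqr_abs. apply sqrt_le_1_alt. unfold Rsqr. fold A C. lra.
Qed.

Lemma tri u v : Hnorm (Hadd u v) <= Hnorm u + Hnorm v.
Proof.
  assert (H := CS u v). assert (Hu := Hnorm_sq u). assert (Hv := Hnorm_sq v).
  assert (0 <= Hnorm u) by apply Hnorm_pos. assert (0 <= Hnorm v) by apply Hnorm_pos.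
  unfold Hnorm at 1. rewrite <- (sqrt_square (Hnorm u + Hnorm v)) by lra.
  apply sqrt_le_1_alt. rewrite Hinner_add_l, !inner_add_r, (Hinner_sym _ v u). nra.
Qed.

Lemma sub_split x y z : Hsub x z = Hadd (Hsub x y) (Hsub y z).
Proof.
  unfold Hsub. rewrite Hadd_assoc. f_equal.
  rewrite <- Hadd_assoc, (Hadd_comm _ _ y), Hadd_opp, Hadd_zero. auto.
Qed.

Lemma tri_sub x y z : Hnorm (Hsub x z) <= Hnorm (Hsub x y) + Hnorm (Hsub y z).
Proof. rewrite (sub_split x y z). apply tri. Qed.

Lemma norm_sub_sym x y : Hnorm (Hsub x y) = Hnorm (Hsub y x).
Proof.
  assert (Hsub y x = Hscal (-1) (Hsub x y)).
  { unfold Hsub. rewrite Hscal_distr_l, Hscal_assoc.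
    replace (-1 * -1) with 1 by ring. rewrite Hscal_one, Hadd_comm. auto. }
  rewrite H. unfold Hnorm. rewrite Hinner_scal_l, inner_scal_r. f_equal. ring.
Qed.

Lemma norm_sub_self x : Hnorm (Hsub x x) = 0.
Proof. unfold Hsub, Hnorm. rewrite Hadd_opp, inner_zero_l. apply sqrt_0. Qed.

End H.

Lemma in_comb eta s t l : in_0_eta s eta -> in_0_eta t eta -> 0 <= l <= 1 ->
  in_0_eta (l * s + (1 - l) * t) eta.
Proof.
  unfold in_0_eta; destruct eta as [e|]; simpl; intros [? ?] [? ?] ?; split; try nra; auto.
  destruct (Rle_lt_dec l (1/2)); nra.
Qed.

Lemma Rlt_le_ER t s eta : t <= s -> Rlt_ER s eta -> Rlt_ER t eta.
Proof. destruct eta; simpl; auto; lra. Qed.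

Lemma SG eta phi dphi : desing eta phi dphi -> forall s t, 0 < s -> Rlt_ER s eta ->
  in_0_eta t eta -> phi t <= phi s + dphi s * (t - s).
Proof.
  intros (H0 & Hcont & Hconc & Hder & _ & _) s t Hs Hse Ht.
  set (h := t - s). destruct (Req_dec h 0) as [Hh|Hh].
  { assert (t = s) by (unfold h in Hh; lra). subst t. rewrite Hh. lra. }
  apply Rnot_lt_le; intro Hlt.
  set (g := phi t - phi s - dphi s * h).
  assert (Hg : 0 < g) by (unfold g, h in *; lra).
  assert (Hah : 0 < Rabs h) by (apply Rabs_pos_lt; auto).
  destruct (Hder s Hs Hse (g / (2 * Rabs h))) as [dl Hdl].
  { apply Rdiv_lt_0_compat; lra. }
  set (l := Rmin 1 (dl / (2 * Rabs h))).
  assert (Hdp := cond_pos dl).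
  assert (Hl0 : 0 < l) by (apply Rmin_pos; [lra| apply Rdiv_lt_0_compat; lra]).
  assert (Hl1 : l <= 1) by apply Rmin_l.
  assert (Hl2 : l <= dl / (2 * Rabs h)) by apply Rmin_r.
  assert (Hw : l * h <> 0) by (apply Rmult_integral_contrapositive; split; lra).
  assert (Hwa : Rabs (l * h) < dl).
  { rewrite Rabs_mult, Rabs_pos_eq by lra.
    apply Rmult_le_compat_r with (r := Rabs h) in Hl2; [|lra].
    replace (dl / (2 * Rabs h) * Rabs h) with (dl/2) in Hl2 by (field; lra). lra. }
  specialize (Hdl (l * h) Hw Hwa).
  assert (Hs0 : in_0_eta s eta) by (split; [lra|auto]).
  specialize (Hconc t s l Ht Hs0 (conj (Rlt_le _ _ Hl0) Hl1)).
  replace (l * t + (1 - l) * s) with (s + l * h) in Hconc by (unfold h; ring).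
  set (X := phi (s + l * h) - phi s) in *.
  assert (HX : Rabs (X - dphi s * (l * h)) < g / (2 * Rabs h) * Rabs (l * h)).
  { replace (X - dphi s * (l * h)) with ((X / (l * h) - dphi s) * (l * h)) by (field; split; lra).
    rewrite Rabs_mult. apply Rmult_lt_compat_r; [apply Rabs_pos_lt; auto| exact Hdl]. }
  rewrite Rabs_mult, (Rabs_pos_eq l) in HX by lra.
  replace (g / (2 * Rabs h) * (l * Rabs h)) with (l * g / 2) in HX by (field; lra).
  apply Rabs_def2 in HX. destruct HX as [HX _].
  unfold X in HX. unfold g in *. nra.
Qed.

Lemma MON eta phi dphi : desing eta phi dphi -> forall t s, 0 <= t -> t <= s ->
  Rlt_ER s eta -> phi t <= phi s.
Proof.
  intros D t s Ht Hts Hs.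
  destruct (Req_dec s 0) as [E0|E0].
  { subst. replace t with 0 by lra. lra. }
  assert (G := SG _ _ _ D s t ltac:(lra) Hs (conj Ht (Rlt_le_ER _ _ _ Hts Hs))).
  destruct D as (_ & _ & _ & _ & _ & Hp). specialize (Hp s ltac:(lra) Hs). nra.
Qed.

Lemma phi_nonneg eta phi dphi : desing eta phi dphi -> forall s, 0 <= s ->
  Rlt_ER s eta -> 0 <= phi s.
Proof.
  intros D s Hs He. assert (H := MON _ _ _ D 0 s (Rle_refl 0) Hs He).
  destruct D as (H0 & _). lra.
Qed.

Lemma dphi_bound eta phi dphi : desing eta phi dphi -> forall s, 0 < s ->
  Rlt_ER s eta -> dphi s * s <= 2 * phi s.
Proof.
  intros D s Hs He.
  assert (He2 : Rlt_ER (s/2) eta) by (apply Rlt_le_ER with s; auto; lra).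
  assert (Hs2 : 0 <= s/2) by lra.
  assert (G := SG _ _ _ D s (s/2) Hs He (conj Hs2 He2)).
  assert (P := phi_nonneg _ _ _ D (s/2) Hs2 He2). lra.
Qed.

Fixpoint psum (u : nat -> R) (n : nat) : R :=
  match n with O => 0 | S n => psum u n + u n end.

Lemma psum_sum u n : psum u (S n) = sum_f_R0 u n.
Proof. induction n. simpl; lra. change (psum u (S (S n))) with (psum u (S n) + u (S n)). rewrite IHn. reflexivity. Qed.

Lemma psum_nonneg u n : (forall i, 0 <= u i) -> 0 <= psum u n.
Proof. intros H; induction n; simpl. lra. specialize (H n); lra. Qed.

Lemma psum_mono u m n : (forall i, 0 <= u i) -> (m <= n)%nat -> psum u m <= psum u n.
Proof. intros H Hmn; induction Hmn; simpl. lra. specialize (H m0); lra. Qed.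

Lemma psum_le_inf u l n : (forall i, 0 <= u i) -> infinite_sum u l -> psum u n <= l.
Proof.
  intros Hp Hs. apply Rnot_lt_le; intro Hlt.
  destruct (Hs (psum u n - l) ltac:(lra)) as [N HN].
  specialize (HN (max N n) (Nat.le_max_l _ _)).
  rewrite <- psum_sum in HN.
  assert (psum u n <= psum u (S (max N n))) by (apply psum_mono; auto; lia).
  unfold Rdist in HN. apply Rabs_def2 in HN. lra.
Qed.

Lemma psum_bounded_sum u B : (forall i, 0 <= u i) -> (forall n, psum u n <= B) ->
  exists l, infinite_sum u l.
Proof.
  intros Hp HB. destruct (growing_cv (fun n => sum_f_R0 u n)) as [l Hl].
  - intro n. simpl. specialize (Hp (S n)). lra.
  - exists B. intros r [i ->]. rewrite <- psum_sum. apply HB.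
  - exists l. exact Hl.
Qed.

Lemma inf_exists (S : R -> Prop) : (exists r, S r) -> (forall r, S r -> 0 <= r) ->
  exists s, is_inf S s.
Proof.
  intros [r0 Hr0] Hlb.
  destruct (completeness (fun r => S (- r))) as [m [Hm1 Hm2]].
  - exists 0. intros r Hr. specialize (Hlb _ Hr). lra.
  - exists (- r0). rewrite Ropp_involutive; auto.
  - exists (- m). split.
    + intros r Hr. assert (m >= - r) by (apply Rle_ge, Hm1; rewrite Ropp_involutive; auto). lra.
    + intros t Ht. assert (m <= - t); [|lra]. apply Hm2. intros r Hr. specialize (Ht _ Hr). lra.
Qed.

Lemma lazy_nonneg (E : PreHilbert) (f : E -> ER) y v : lazy_slope f y = Fin v -> 0 <= v.
Proof.
  unfold lazy_slope. destruct excluded_middle_informative as [Hex|]; [|discriminate].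
  intro Hv; injection Hv; clear Hv; intros <-.
  set (P := fun r => exists p, lim_sub f y p /\ r = Hnorm p).
  assert (HP : exists s, is_inf P s).
  { apply inf_exists.
    - destruct Hex as [p Hp]. exists (Hnorm p). exists p; auto.
    - intros r [p [_ ->]]. apply sqrt_pos. }
  destruct (epsilon_spec (inhabits 0) _ HP) as [_ H2].
  apply H2. intros r [p [_ ->]]. apply sqrt_pos.
Qed.

Lemma psum_shift u n : psum (fun i => u (S i)) n + u 0%nat = psum u (S n).
Proof. induction n; simpl in *. lra. lra. Qed.

Theorem mainTheorem9 (E : Hilbert) (f : E -> ER) (xstar : E) (fstar : R)
  (eta : ER) (delta rho : R) (phi dphi : R -> R)
  (x : nat -> E) (a b eps : nat -> R) (a_low M Seps : R) :
  proper f -> lsc f -> f xstar = Fin fstar ->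
  KL_at f xstar fstar eta delta phi dphi ->
  (* H1 *)
  (forall k, 0 < a k /\
     ER_le (ER_addR (f (x (S k))) (a k * (Hnorm (Hsub (x (S k)) (x k)))^2)) (f (x k))) ->
  (* H2 *)
  (forall k, 0 < b (S k) /\ 0 <= eps (S k) /\
     ER_le (match lazy_slope f (x (S k)) with
            | Fin v => Fin (b (S k) * v) | PInf => PInf end)
           (Fin (Hnorm (Hsub (x (S k)) (x k)) + eps (S k)))) ->
  (* H3 (i) *)
  0 < a_low -> (forall k, a_low <= a k) ->
  (* H3 (ii): (b_k)_{k>=1} not summable *)
  ~ (exists l, infinite_sum (fun i => b (S i)) l) ->
  (* H3 (iii): M = sup_{k>=1} 1/(a_k b_k) < oo *)
  is_lub (fun r => exists k, (1 <= k)%nat /\ r = / (a k * b k)) M ->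
  (* H3 (iv): (eps_k)_{k>=1} summable, with sum Seps *)
  infinite_sum (fun i => eps (S i)) Seps ->
  (* S(x*, delta, rho) *)
  delta > rho -> rho > 0 ->
  (forall k, (forall i, (i <= k)%nat -> uGamma f xstar fstar eta rho (x i)) ->
     uGamma f xstar fstar eta delta (x (S k))) ->
  Gamma f xstar fstar eta rho (x 0%nat) ->
  (exists f0, f (x 0%nat) = Fin f0 /\
     Hnorm (Hsub xstar (x 0%nat)) + 2 * sqrt ((f0 - fstar) / a 0%nat)
       + M * phi (f0 - fstar) + Seps < rho) ->
  (* conclusions *)
  (forall k, uGamma f xstar fstar eta rho (x k)) /\
  exists xbar : E,
    Hnorm (Hsub xbar xstar) <= rho /\
    Hcv x xbar /\
    (exists l, infinite_sum (fun i => Hnorm (Hsub (x (S (S i))) (x (S i)))) l) /\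
    ER_liminf_zero (fun k => lazy_slope f (x k)) /\
    (exists fk : nat -> R, (forall k, f (x k) = Fin (fk k)) /\
       Un_cv fk fstar /\ ER_le (f xbar) (Fin fstar)).
Proof.
  intros Hprop Hlsc Hfs [Hdel [Heta [D HKL]]] H1 H2 Hal Hal2 Hb Hlub Heps Hdr Hr HS HG0
    [f0 [Hf0 HB]].
  set (g := fun k => match f (x k) with Fin r => r | PInf => 0 end).
  set (d := fun k => Hnorm (Hsub (x (S k)) (x k))).
  set (uG := fun r k => uGamma f xstar fstar eta r (x k)).
  assert (Hdest : forall r k, uG r k -> f (x k) = Fin (g k) /\ fstar <= g k /\
            Rlt_ER (g k - fstar) eta /\ Hnorm (Hsub (x k) xstar) < r).
  { intros r k [Hn [fx [Hfx [Hl He]]]]. unfold g. rewrite Hfx. auto. }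
  assert (Hweak : forall k, uG rho k -> uG delta k).
  { intros k [Hn Hx]. split; auto. lra. }
  assert (Hdn : forall k, 0 <= d k) by (intro; apply Hnorm_pos).
  assert (Hen : forall k, 0 <= eps (S k)) by (intro k; apply (H2 k)).
  assert (HM : forall k, (1 <= k)%nat -> / (a k * b k) <= M).
  { intros k Hk. apply (proj1 Hlub). exists k; auto. }
  assert (Hb1 : forall k, (1 <= k)%nat -> 0 < b k).
  { intros [|k] Hk; [lia|]. apply (H2 k). }
  assert (HM0 : 0 <= M).
  { apply Rle_trans with (/ (a 1%nat * b 1%nat)); [|apply HM; lia].
    apply Rlt_le, Rinv_0_lt_compat, Rmult_lt_0_compat; [apply (H1 1%nat)|apply Hb1; lia]. }
  assert (H1' : forall k, uG delta k -> uG delta (S k) -> g (S k) + a k * d k ^ 2 <= g k).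
  { intros k U1 U2. destruct (Hdest _ _ U1) as [F1 _]. destruct (Hdest _ _ U2) as [F2 _].
    destruct (H1 k) as [_ Hle]. rewrite F1, F2 in Hle. simpl in Hle. unfold d. lra. }
  set (P := fun k => phi (g k - fstar)).
  assert (Hg0 : g 0%nat = f0) by (unfold g; rewrite Hf0; auto).

  assert (HPmon : forall k, uG delta k -> uG delta (S k) -> P (S k) <= P k).
  { intros k U1 U2. pose proof (H1' k U1 U2).
    destruct (Hdest _ _ U1) as (_ & G1 & E1 & _). destruct (Hdest _ _ U2) as (_ & G2 & E2 & _).
    unfold P. apply (MON _ _ _ D); auto; try lra.
    assert (0 <= a k * d k ^ 2) by (apply Rmult_le_pos; [apply Rlt_le, (H1 k)| apply pow2_ge_0]). lra. }
  assert (HPnn : forall k, uG delta k -> 0 <= P k).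
  { intros k U. destruct (Hdest _ _ U) as (_ & G1 & E1 & _). unfold P.
    apply (phi_nonneg _ _ _ D); auto; lra. }
  assert (Step : forall j, uG delta (S j) -> uG delta (S (S j)) ->
     2 * d (S j) <= d j + eps (S j) + M * (P (S j) - P (S (S j)))).
  { intros j U1 U2. pose proof (H1' _ U1 U2) as Hh.
    destruct (Hdest _ _ U1) as (F1 & G1 & E1 & N1).
    destruct (Hdest _ _ U2) as (F2 & G2 & E2 & N2).
    assert (Ha := proj1 (H1 (S j))). assert (Hdd := Hdn (S j)). assert (Hdj := Hdn j).
    assert (He := Hen j).
    pose proof (HPmon _ U1 U2) as Hpm.
    destruct (Rle_lt_or_eq_dec _ _ G1) as [Gt|Eq].
    2:{ assert (Z1 : a (S j) * d (S j) ^ 2 <= 0) by lra.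
        assert (Z2 : d (S j) ^ 2 <= 0).
        { apply Rmult_le_reg_l with (a (S j)); lra. }
        assert (Hz : d (S j) = 0) by nra. rewrite Hz.
        assert (g (S (S j)) = g (S j)) by nra. unfold P. rewrite H. nra. }
    set (s := g (S j) - fstar). set (t := g (S (S j)) - fstar).
    assert (Gm : Gamma f xstar fstar eta delta (x (S j))).
    { split; [lra|]. exists (g (S j)); repeat split; auto. }
    pose proof (HKL _ _ Gm F1) as Hk.
    destruct (H2 j) as (Hbp & _ & Hle).
    destruct (lazy_slope f (x (S j))) as [v|] eqn:Hl; simpl in Hle, Hk; [|contradiction].
    fold (d j) in Hle. fold s in Hk.
    assert (Hs0 : 0 < s) by (unfold s; lra). assert (Ht0 : 0 <= t) by (unfold t; lra).
    assert (Hsg := SG _ _ _ D s t Hs0 E1 (conj Ht0 E2)).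
    destruct D as (_ & _ & _ & _ & _ & Hdp).
    assert (Hdps := Hdp s Hs0 E1).
    assert (HMj := HM (S j) (le_n_S _ _ (Nat.le_0_l j))).
    unfold P; fold s t.
    set (A := a (S j)) in *. set (Bb := b (S j)) in *. set (Dp := dphi s) in *.
    set (dd := d (S j)) in *. set (c := d j + eps (S j)).
    set (Del := phi s - phi t).
    assert (I1 : Dp * (s - t) <= Del) by (unfold Del; lra).
    assert (I2 : A * dd ^ 2 <= s - t) by (unfold s, t; lra).
    assert (I3 : A * Dp * dd ^ 2 <= Del) by nra.
    assert (I4 : Bb <= Dp * c).
    { assert (Bb * 1 <= Bb * (Dp * v)) by (apply Rmult_le_compat_l; lra).
      assert (Dp * (Bb * v) <= Dp * c) by (apply Rmult_le_compat_l; unfold c; lra).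
      nra. }
    assert (Hc : 0 <= c) by (unfold c; lra).
    assert (I5 : A * Bb * dd ^ 2 <= c * Del).
    { assert (0 <= A * dd ^ 2) by (apply Rmult_le_pos; [lra|apply pow2_ge_0]).
      assert ((A * dd ^ 2) * Bb <= (A * dd ^ 2) * (Dp * c)) by (apply Rmult_le_compat_l; lra).
      assert (c * (A * Dp * dd ^ 2) <= c * Del) by (apply Rmult_le_compat_l; lra).
      nra. }
    assert (I6 : 1 <= M * (A * Bb)).
    { assert (0 < A * Bb) by nra.
      apply Rmult_le_compat_r with (r := A * Bb) in HMj; [|lra].
      rewrite Rinv_l in HMj; lra. }
    assert (HDel : 0 <= Del).
    { assert (0 <= A * dd ^ 2) by (apply Rmult_le_pos; [lra|apply pow2_ge_0]).
      assert (0 <= Dp * (s - t)) by (apply Rmult_le_pos; lra). lra. }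
    assert (I7 : dd ^ 2 <= M * c * Del).
    { assert (0 < A * Bb) by (apply Rmult_lt_0_compat; lra).
      apply Rmult_le_reg_l with (A * Bb); auto.
      assert (0 <= c * Del) by (apply Rmult_le_pos; lra).
      assert (c * Del * 1 <= c * Del * (M * (A * Bb))) by (apply Rmult_le_compat_l; lra).
      nra. }
    fold Del. assert (0 <= M * Del) by (apply Rmult_le_pos; lra).
    assert (0 <= (c - M * Del) ^ 2) by apply pow2_ge_0.
    apply Rnot_lt_le; intro Hc2. nra. }

  set (ep := fun i => eps (S i)).
  assert (T : forall n, (forall i, (i <= S n)%nat -> uG delta i) ->
     psum d (S n) + d n <= 2 * d 0%nat + psum ep n + M * (P 1%nat - P (S n))).
  { induction n as [|n IH]; intros Hall.
    - simpl. replace (P 1%nat - P 1%nat) with 0 by ring. lra.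
    - assert (IH' := IH (fun i Hi => Hall i (le_S _ _ Hi))).
      assert (St := Step n (Hall (S n) (le_S _ _ (le_n _))) (Hall (S (S n)) (le_n _))).
      change (psum d (S (S n))) with (psum d (S n) + d (S n)).
      change (psum ep (S n)) with (psum ep n + eps (S n)). lra. }
  assert (Hd0 : uG delta 0%nat -> uG delta 1%nat -> d 0%nat <= sqrt ((f0 - fstar) / a 0%nat)).
  { intros U0 U1. pose proof (H1' _ U0 U1) as Hh.
    destruct (Hdest _ _ U1) as (_ & G1 & _).
    assert (Ha0 := proj1 (H1 0%nat)).
    assert (Hq : d 0%nat * d 0%nat <= (f0 - fstar) / a 0%nat).
    { apply Rmult_le_reg_l with (a 0%nat); auto.
      replace (a 0%nat * ((f0 - fstar) / a 0%nat)) with (f0 - fstar) by (field; lra). nra. }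
    rewrite <- (sqrt_square (d 0%nat)) by apply Hdn. apply sqrt_le_1_alt; auto. }
  set (Bnd := 2 * sqrt ((f0 - fstar) / a 0%nat) + M * phi (f0 - fstar) + Seps).
  assert (Hepn : forall i, 0 <= ep i) by (intro; apply Hen).
  assert (Bd : forall n, (forall i, (i <= S n)%nat -> uG delta i) -> psum d (S n) <= Bnd).
  { intros n Hall. assert (Tn := T n Hall).
    assert (U0 := Hall 0%nat (Nat.le_0_l _)). assert (U1 := Hall 1%nat (le_n_S _ _ (Nat.le_0_l _))).
    assert (A1 := Hd0 U0 U1).
    assert (A2 := psum_le_inf ep Seps n Hepn Heps).
    assert (A3 := HPnn _ (Hall (S n) (le_n _))).
    assert (A4 := HPmon _ U0 U1).
    assert (A5 : P 0%nat = phi (f0 - fstar)) by (unfold P; rewrite Hg0; auto).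
    assert (A6 := Hdn n).
    assert (0 <= M * (P 0%nat - P 1%nat + P (S n))) by (apply Rmult_le_pos; lra).
    unfold Bnd. rewrite A5 in H. lra. }
  assert (NB : forall n, Hnorm (Hsub (x n) xstar) <= Hnorm (Hsub (x 0%nat) xstar) + psum d n).
  { induction n as [|n IH]; simpl. lra.
    pose proof (tri_sub _ (x (S n)) (x n) xstar). fold (d n) in H. lra. }
  assert (Q : forall k i, (i <= k)%nat -> uG rho i).
  { induction k as [|k IH]; intros i Hi.
    - inversion Hi; subst. destruct HG0 as [Hn [fx [Hfx [Hl He]]]].
      split; auto. exists fx; repeat split; auto; lra.
    - destruct (Nat.eq_dec i (S k)) as [->|Hne]; [|apply IH; lia].
      assert (U := HS k (IH)).
      assert (Hall : forall i, (i <= S k)%nat -> uG delta i).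
      { intros i Hi'. destruct (Nat.eq_dec i (S k)) as [->|Hne']; auto.
        apply Hweak, IH. lia. }
      assert (B1 := Bd k Hall). assert (B2 := NB (S k)).
      rewrite norm_sub_sym in HB.
      destruct U as [_ Hrest]. split; auto. unfold Bnd in B1. lra. }
  assert (Hall : forall k, uG rho k) by (intro k; apply (Q k k); auto).
  assert (HallD : forall k, uG delta k) by (intro k; apply Hweak, Hall).
  assert (Bd' : forall n, psum d n <= Bnd).
  { intro n. apply Rle_trans with (psum d (S n)). apply psum_mono; auto.
    apply Bd; auto. }

  set (bp := fun i => b (S i)).
  assert (Hbpp : forall i, 0 <= bp i) by (intro i; apply Rlt_le, (H2 i)).
  assert (NS : forall kap N, 0 < kap ->
     (forall k, (N <= k)%nat -> forall v, lazy_slope f (x (S k)) = Fin v -> kap <= v) -> False).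
  { intros kap N Hk HN.
    assert (C : forall n, kap * psum bp n <= kap * psum bp N + psum d n + psum ep n).
    { induction n as [|n IH].
      - simpl. assert (0 <= kap * psum bp N) by (apply Rmult_le_pos; [lra|apply psum_nonneg; auto]).
        lra.
      - assert (0 <= psum d (S n)) by (apply psum_nonneg; auto).
        assert (0 <= psum ep (S n)) by (apply psum_nonneg; auto).
        destruct (Compare_dec.le_lt_dec N n) as [Hge|Hlt].
        2:{ assert (psum bp (S n) <= psum bp N) by (apply psum_mono; auto).
          assert (kap * psum bp (S n) <= kap * psum bp N) by (apply Rmult_le_compat_l; lra).
          lra. }
        destruct (H2 n) as (Hbp & _ & Hle).
          destruct (lazy_slope f (x (S n))) as [v|] eqn:Hl; simpl in Hle; [|contradiction].
          assert (Hkv := HN n Hge v Hl).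
          assert (kap * b (S n) <= v * b (S n)) by (apply Rmult_le_compat_r; lra).
          change (psum bp (S n)) with (psum bp n + b (S n)).
          change (psum d (S n)) with (psum d n + d n).
          change (psum ep (S n)) with (psum ep n + eps (S n)).
          fold (d n) in Hle. rewrite Rmult_plus_distr_l. lra. }
    apply Hb. apply (psum_bounded_sum bp ((kap * psum bp N + Bnd + Seps) / kap)); auto.
    intro n. apply Rmult_le_reg_l with kap; auto.
    replace (kap * ((kap * psum bp N + Bnd + Seps) / kap)) with (kap * psum bp N + Bnd + Seps)
      by (field; lra).
    assert (C' := C n). pose proof (Bd' n). pose proof (psum_le_inf ep Seps n Hepn Heps). lra. }

  assert (gmon1 : forall k, g (S k) <= g k).
  { intro k. pose proof (H1' k (HallD k) (HallD (S k))).
    assert (0 <= a k * d k ^ 2) by (apply Rmult_le_pos; [apply Rlt_le, (H1 k)| apply pow2_ge_0]). lra. }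
  assert (gmon : forall m n, (m <= n)%nat -> g n <= g m).
  { intros m n Hmn; induction Hmn. lra. pose proof (gmon1 m0). lra. }
  assert (Dist : forall m n, (m <= n)%nat -> Hnorm (Hsub (x n) (x m)) <= psum d n - psum d m).
  { intros m n Hmn; induction Hmn.
    - rewrite norm_sub_self. lra.
    - pose proof (tri_sub _ (x (S m0)) (x m0) (x m)). fold (d m0) in H. simpl. lra. }
  destruct (psum_bounded_sum d Bnd Hdn Bd') as [ld Hld].
  assert (Hcau : Hcauchy x).
  { intros e He. destruct (Hld (e/2) ltac:(lra)) as [N HN]. exists (S N).
    assert (K : forall n m, (S N <= m)%nat -> (m <= n)%nat -> Hnorm (Hsub (x n) (x m)) < e).
    { intros n m Hm Hmn. destruct n as [|n]; [lia|]. destruct m as [|m]; [lia|].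
      pose proof (Dist _ _ Hmn). rewrite !psum_sum in H.
      pose proof (HN n ltac:(lia)). pose proof (HN m ltac:(lia)).
      unfold Rdist in *. apply Rabs_def2 in H0. apply Rabs_def2 in H3. lra. }
    intros n m Hn Hm. destruct (Nat.le_ge_cases m n).
    - apply K; auto.
    - rewrite norm_sub_sym. apply K; auto. }
  destruct (Hcomplete E x Hcau) as [xbar Hxbar].
  split; [exact Hall|]. exists xbar.
  assert (Hg : forall k, f (x k) = Fin (g k)) by (intro k; apply (Hdest _ _ (Hall k))).
  assert (LI : ER_liminf_zero (fun k => lazy_slope f (x k))).
  { split.
    - intros e He. exists 0%nat. intros k _.
      destruct (lazy_slope f (x k)) as [v|] eqn:Hl; simpl; auto.
      pose proof (lazy_nonneg _ _ _ _ Hl). lra.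
    - intros e He N. apply NNPP; intro Hno. apply (NS e N He).
      intros k Hk v Hv. apply Rnot_lt_le. intro Hlt. apply Hno. exists (S k). split; [lia|].
      rewrite Hv. simpl. exact Hlt. }
  assert (CV : Un_cv g fstar).
  { intros e He. destruct (classic (exists N, g N - fstar < e)) as [[N HN]|Hn].
    - exists N. intros n Hn. pose proof (gmon _ _ Hn).
      destruct (Hdest _ _ (Hall n)) as (_ & Gn & _). unfold Rdist.
      apply Rabs_def1; lra.
    - exfalso.
      assert (Hge : forall k, e <= g k - fstar).
      { intro k. apply Rnot_lt_le. intro. apply Hn. exists k. auto. }
      set (P0 := phi (f0 - fstar)).
      assert (Bnds : forall k, 0 < dphi (g k - fstar) /\ dphi (g k - fstar) * (g k - fstar) <= 2 * P0).
      { intro k. destruct (Hdest _ _ (Hall k)) as (_ & Gk & Ek & _).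
        assert (Hs : 0 < g k - fstar) by (pose proof (Hge k); lra).
        destruct D as (Da & Db & Dc & Dd & De & Dpos) eqn:HD.
        split. apply Dpos; auto.
        pose proof (dphi_bound _ _ _ D _ Hs Ek).
        assert (phi (g k - fstar) <= P0).
        { unfold P0. rewrite <- Hg0. apply (MON _ _ _ D); auto. lra.
          pose proof (gmon 0%nat k (Nat.le_0_l _)). lra.
          destruct (Hdest _ _ (Hall 0%nat)) as (_ & _ & E0 & _). auto. }
        lra. }
      assert (HP0 : 0 < P0).
      { destruct (Bnds 0%nat) as [B1 B2]. pose proof (Hge 0%nat).
        assert (0 < dphi (g 0%nat - fstar) * (g 0%nat - fstar)) by (apply Rmult_lt_0_compat; lra). lra. }
      apply (NS (e / (2 * P0)) 0%nat).
      { apply Rdiv_lt_0_compat; lra. }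
      intros k _ v Hv.
      destruct (Hdest _ _ (Hall (S k))) as (Fk & Gk & Ek & Nk).
      assert (Gm : Gamma f xstar fstar eta delta (x (S k))).
      { split; [lra|]. exists (g (S k)); repeat split; auto. pose proof (Hge (S k)). lra. }
      pose proof (HKL _ _ Gm Fk) as Hk. rewrite Hv in Hk. simpl in Hk.
      destruct (Bnds (S k)) as [B1 B2]. pose proof (Hge (S k)).
      pose proof (lazy_nonneg _ _ _ _ Hv).
      set (s := g (S k) - fstar) in *. set (Dp := dphi s) in *.
      assert (e <= 2 * P0 * v).
      { assert (Dp * s * v <= 2 * P0 * v) by (apply Rmult_le_compat_r; lra).
        assert (1 * s <= Dp * v * s) by (apply Rmult_le_compat_r; lra). nra. }
      apply Rmult_le_reg_l with (2 * P0). lra.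
      replace (2 * P0 * (e / (2 * P0))) with e by (field; lra). lra. }
  split.
  { apply Rnot_lt_le. intro Hlt. destruct (Hxbar (Hnorm (Hsub xbar xstar) - rho) ltac:(lra)) as [N HN].
    specialize (HN N (le_n _)). pose proof (tri_sub _ xbar (x N) xstar).
    rewrite norm_sub_sym in HN. destruct (Hdest _ _ (Hall N)) as (_ & _ & _ & NN). lra. }
  split; [exact Hxbar|].
  split.
  { apply (psum_bounded_sum (fun i => d (S i)) Bnd).
    - intro; apply Hdn.
    - intro n. pose proof (psum_shift d n). pose proof (Bd' (S n)). pose proof (Hdn 0%nat). lra. }
  split; [exact LI|].
  exists g. split; [exact Hg|]. split; [exact CV|].
  assert (Key : forall r, fstar < r -> Rlt_ER r (f xbar) -> False).
  { intros r Hfr Hrx. destruct (Hlsc xbar r Hrx) as [dl [Hdl Hy]].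
    destruct (Hxbar dl Hdl) as [N1 HN1]. destruct (CV (r - fstar) ltac:(lra)) as [N2 HN2].
    specialize (HN1 (max N1 N2) (Nat.le_max_l _ _)). specialize (HN2 (max N1 N2) (Nat.le_max_r _ _)).
    specialize (Hy _ HN1). rewrite Hg in Hy. simpl in Hy. unfold Rdist in HN2.
    apply Rabs_def2 in HN2. lra. }
  destruct (f xbar) as [y|] eqn:Hfx; simpl.
  - apply Rnot_lt_le; intro Hy. apply (Key ((fstar + y) / 2)). lra. simpl. lra.
  - apply (Key (fstar + 1)). lra. simpl. auto.
Qed.
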